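(* Let $X_6=E_6/K_6$ be a semi-equivelar toroidal map of type $[4^1,8^2]$, and let $X_6^\#=E_6^\#/K_6$ be its associated equivelar map of type $[4^4]$. Then: (1) if $X_6^\#$ has exactly $2$ edge orbits, then $X_6$ has exactly $3$ or exactly $4$ edge orbits; (2) if $X_6^\#$ has exactly $1$ edge orbit, then $X_6$ has exactly $2$ or exactly $3$ edge orbits; (3) if $X_6$ has exactly $4$ edge orbits, then $X_6^\#$ has exactly $2$ edge orbits; (4) if $X_6$ has exactly $2$ edge orbits, then $X_6^\#$ has exactly $1$ edge orbit.
   Context: $E_6$ is the semi-equivelar tiling of the plane of type $[4^1,8^2]$ (each vertex surrounded by a square and two regular octagons). $K_6$ is a discrete subgroup of ${\rm Aut}(E_6)$ acting without fixed points and consisting of translations, with rank-2 translation lattice, so that $X_6=E_6/K_6$ is a map on the torus. The associated equivelar tiling $E_6^\#$ is the square tiling (type $[4^4]$) whose vertices are the centres of the octagons of $E_6$, two centres joined when at minimal distance; $X_6^\#:=E_6^\#/K_6$. Edge orbits of a map are the orbits of its automorphism group on its set of edges. *)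

(* Defs.v *)
From Stdlib Require Import ZArith List.
Open Scope Z_scope.

Inductive dir := dE | dN | dW | dS.

Definition dvec (d : dir) : Z * Z :=
  match d with dE => (1, 0) | dN => (0, 1) | dW => (-1, 0) | dS => (0, -1) end.
Definition dsucc (d : dir) : dir :=
  match d with dE => dN | dN => dW | dW => dS | dS => dE end.
Definition dpred (d : dir) : dir :=
  match d with dE => dS | dN => dE | dW => dN | dS => dW end.
Definition dopp (d : dir) : dir :=
  match d with dE => dW | dN => dS | dW => dE | dS => dN end.

(* A flag (vertex, edge, face) of the square tiling: vertex (sx,sy), edge from it in
   direction sd, face = the unit square at the vertex spanned by directions sd and
   dsucc sd (if ss = true) or sd and dpred sd (if ss = false). *)
Record sqflag := SqF { sx : Z; sy : Z; sd : dir; ss : bool }.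

Definition s0 (f : sqflag) : sqflag :=
  SqF (sx f + fst (dvec (sd f))) (sy f + snd (dvec (sd f))) (dopp (sd f)) (negb (ss f)).
Definition s1 (f : sqflag) : sqflag :=
  SqF (sx f) (sy f) (if ss f then dsucc (sd f) else dpred (sd f)) (negb (ss f)).
Definition s2 (f : sqflag) : sqflag :=
  SqF (sx f) (sy f) (sd f) (negb (ss f)).

(* ---------- The tiling E_6 of type [4^1,8^2] ----------
   Octagons of E_6 <-> vertices of E_6^#, squares <-> faces of E_6^#,
   octagon-octagon edges <-> edges of E_6^#, square edges <-> incident
   (vertex, face) pairs of E_6^#, vertices <-> incident (edge, face) pairs.
   A flag of E_6 is a flag (v,e,f) of E_6^# together with a type:
     tA : (vertex (e,f), octagon-octagon edge dual to e, octagon v)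
     tB : (vertex (e,f), square edge (v,f),            octagon v)
     tC : (vertex (e,f), square edge (v,f),            square f)        *)
Inductive ftype := tA | tB | tC.
Definition e6flag := (sqflag * ftype)%type.

Definition r0 (x : e6flag) : e6flag :=
  match snd x with tA => (s2 (fst x), tA) | tB => (s1 (fst x), tB) | tC => (s1 (fst x), tC) end.
Definition r1 (x : e6flag) : e6flag :=
  match snd x with tA => (fst x, tB) | tB => (fst x, tA) | tC => (s0 (fst x), tC) end.
Definition r2 (x : e6flag) : e6flag :=
  match snd x with tA => (s0 (fst x), tA) | tB => (fst x, tC) | tC => (fst x, tB) end.

(* ---------- The translation group K_6 ----------
   The translations of E_6 (and of E_6^#) are exactly the integer translations of Z^2;
   a rank-2 subgroup K is the lattice generated by two independent vectors u, v. *)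
Definition in_lattice (u v : Z * Z) (dx dy : Z) : Prop :=
  exists m n : Z, dx = m * fst u + n * fst v /\ dy = m * snd u + n * snd v.

Definition rank2 (u v : Z * Z) : Prop := fst u * snd v - snd u * fst v <> 0.

Definition sq_eqv (u v : Z * Z) (f g : sqflag) : Prop :=
  sd f = sd g /\ ss f = ss g /\ in_lattice u v (sx g - sx f) (sy g - sy f).

Definition e6_eqv (u v : Z * Z) (x y : e6flag) : Prop :=
  snd x = snd y /\ sq_eqv u v (fst x) (fst y).

(* ---------- Generic: maps given by flags modulo an equivalence ----------
   The flags of the quotient map E/K are the classes of [eqv]; the involutions
   descend to the quotient.  A map automorphism of E/K is a bijection of its
   flags commuting with the three involutions; we represent it by a function g
   on representatives which respects classes and induces such a bijection. *)
Definition is_qaut {F : Type} (eqv : F -> F -> Prop) (q0 q1 q2 : F -> F) (g : F -> F) : Prop :=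
  (forall x y, eqv x y -> eqv (g x) (g y)) /\
  (forall x y, eqv (g x) (g y) -> eqv x y) /\
  (forall y, exists x, eqv (g x) y) /\
  (forall x, eqv (g (q0 x)) (q0 (g x))) /\
  (forall x, eqv (g (q1 x)) (q1 (g x))) /\
  (forall x, eqv (g (q2 x)) (q2 (g x))).

(* flags x, y of E/K lie on the same edge (edges = <q0,q2>-orbits of flags) *)
Definition same_edge {F : Type} (eqv : F -> F -> Prop) (q0 q2 : F -> F) (x y : F) : Prop :=
  eqv x y \/ eqv (q0 x) y \/ eqv (q2 x) y \/ eqv (q0 (q2 x)) y.

Definition edge_orbit_rel {F : Type} (eqv : F -> F -> Prop) (q0 q1 q2 : F -> F) (x y : F) : Prop :=
  exists g, is_qaut eqv q0 q1 q2 g /\ same_edge eqv q0 q2 (g x) y.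

Definition n_classes {F : Type} (R : F -> F -> Prop) (n : nat) : Prop :=
  exists xs : list F, length xs = n /\
    ForallOrdPairs (fun x y => ~ R x y) xs /\
    (forall y, exists x, In x xs /\ R x y).

Definition X6_edge_orbits (u v : Z * Z) (n : nat) : Prop :=
  n_classes (edge_orbit_rel (e6_eqv u v) r0 r1 r2) n.
Definition X6sharp_edge_orbits (u v : Z * Z) (n : nat) : Prop :=
  n_classes (edge_orbit_rel (sq_eqv u v) s0 s1 s2) n.

(* Main.v *)
Require Import Defs.
From Stdlib Require Import ZArith List Lia Classical.
Open Scope Z_scope.
Import ListNotations.

Inductive d4 := I0 | R1 | R2 | R3 | FX | FY | FD | FA.

Definition mat (A : d4) (p : Z*Z) : Z*Z :=
  let (x,y) := p in
  match A with
  | I0 => (x,y) | R1 => (-y, x) | R2 => (-x,-y) | R3 => (y,-x)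
  | FX => (x,-y) | FY => (-x,y) | FD => (y,x) | FA => (-y,-x) end.

Definition dact (A : d4) (d : dir) : dir :=
  match A, d with
  | I0, _ => d
  | R1, _ => dsucc d
  | R2, _ => dsucc (dsucc d)
  | R3, _ => dpred d
  | FX, dE => dE | FX, dN => dS | FX, dW => dW | FX, dS => dN
  | FY, dE => dW | FY, dN => dN | FY, dW => dE | FY, dS => dS
  | FD, dE => dN | FD, dN => dE | FD, dW => dS | FD, dS => dW
  | FA, dE => dS | FA, dN => dW | FA, dW => dN | FA, dS => dE
  end.

Definition flip A := match A with FX | FY | FD | FA => true | _ => false end.
Definition swap A := match A with R1 | R3 | FD | FA => true | _ => false end.
Definition hor d := match d with dE | dW => true | _ => false end.
Definition inv A := match A with R1 => R3 | R3 => R1 | _ => A end.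

Definition haff A (t : Z*Z) (f : sqflag) : sqflag :=
  SqF (fst (mat A (sx f, sy f)) + fst t) (snd (mat A (sx f, sy f)) + snd t)
      (dact A (sd f)) (xorb (flip A) (ss f)).
Definition haff6 A t (x : e6flag) : e6flag := (haff A t (fst x), snd x).

Lemma haff_s0 A t f : haff A t (s0 f) = s0 (haff A t f).
Proof. destruct f as [a b d s]; destruct A, d, s; unfold haff, s0; simpl; f_equal; ring. Qed.
Lemma haff_s1 A t f : haff A t (s1 f) = s1 (haff A t f).
Proof. destruct f as [a b d s]; destruct A, d, s; unfold haff, s1; simpl; f_equal; ring. Qed.
Lemma haff_s2 A t f : haff A t (s2 f) = s2 (haff A t f).
Proof. destruct f as [a b d s]; destruct A, d, s; unfold haff, s2; simpl; f_equal; ring. Qed.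

Lemma mat_lin A m n p q : mat A (m*fst p + n*fst q, m*snd p + n*snd q) =
  (m * fst (mat A p) + n * fst (mat A q), m * snd (mat A p) + n * snd (mat A q)).
Proof. destruct p, q, A; simpl; f_equal; ring. Qed.

Lemma mat_inv A p : mat (inv A) (mat A p) = p.
Proof. destruct p, A; simpl; f_equal; ring. Qed.

Lemma mat_I0 p : mat I0 p = p. Proof. destruct p; reflexivity. Qed.
Lemma mat_R2 p : mat R2 p = (- fst p, - snd p). Proof. destruct p; reflexivity. Qed.

Section L.
Variables u v : Z * Z.

Lemma latt0 : in_lattice u v 0 0.
Proof. exists 0, 0; lia. Qed.
Lemma latt_eq a b a' b' : in_lattice u v a b -> a = a' -> b = b' -> in_lattice u v a' b'.
Proof. intros H -> ->; exact H. Qed.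
Lemma latt_add a b c d : in_lattice u v a b -> in_lattice u v c d -> in_lattice u v (a+c) (b+d).
Proof. intros [m [n [H1 H2]]] [m' [n' [H3 H4]]]; exists (m+m'), (n+n'); subst; split; ring. Qed.
Lemma latt_opp a b : in_lattice u v a b -> in_lattice u v (-a) (-b).
Proof. intros [m [n [H1 H2]]]; exists (-m), (-n); subst; split; ring. Qed.

Lemma sq_refl f : sq_eqv u v f f.
Proof. split; [reflexivity|split;[reflexivity|]]. eapply latt_eq; [apply latt0|ring|ring]. Qed.
Lemma sq_sym f g : sq_eqv u v f g -> sq_eqv u v g f.
Proof. intros [Hd [Hs Hl]]; split; [auto|split;[auto|]].
  eapply latt_eq; [apply (latt_opp _ _ Hl)|ring|ring]. Qed.
Lemma sq_trans f g h : sq_eqv u v f g -> sq_eqv u v g h -> sq_eqv u v f h.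
Proof. intros [Hd [Hs Hl]] [Hd' [Hs' Hl']]; split; [congruence|split;[congruence|]].
  eapply latt_eq; [apply (latt_add _ _ _ _ Hl Hl')|ring|ring]. Qed.

Lemma s0_resp f g : sq_eqv u v f g -> sq_eqv u v (s0 f) (s0 g).
Proof. destruct f as [a b d s], g as [a' b' d' s']; unfold sq_eqv, s0; cbn [sx sy sd ss].
  intros [Hd [Hs Hl]]; subst d' s'; split;[reflexivity|split;[reflexivity|]].
  eapply latt_eq; [exact Hl|ring|ring]. Qed.
Lemma s1_resp f g : sq_eqv u v f g -> sq_eqv u v (s1 f) (s1 g).
Proof. destruct f as [a b d s], g as [a' b' d' s']; unfold sq_eqv, s1; cbn [sx sy sd ss].
  intros [Hd [Hs Hl]]; subst d' s'; split;[reflexivity|split;[reflexivity|]]. exact Hl. Qed.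
Lemma s2_resp f g : sq_eqv u v f g -> sq_eqv u v (s2 f) (s2 g).
Proof. destruct f as [a b d s], g as [a' b' d' s']; unfold sq_eqv, s2; cbn [sx sy sd ss].
  intros [Hd [Hs Hl]]; subst d' s'; split;[reflexivity|split;[reflexivity|]]. exact Hl. Qed.

Lemma e6_refl x : e6_eqv u v x x.
Proof. split; [reflexivity| apply sq_refl]. Qed.
Lemma e6_sym x y : e6_eqv u v x y -> e6_eqv u v y x.
Proof. intros [H1 H2]; split; [auto| apply sq_sym; auto]. Qed.
Lemma e6_trans x y z : e6_eqv u v x y -> e6_eqv u v y z -> e6_eqv u v x z.
Proof. intros [H1 H2] [H3 H4]; split; [congruence| eapply sq_trans; eauto]. Qed.

Lemma r0_resp x y : e6_eqv u v x y -> e6_eqv u v (r0 x) (r0 y).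
Proof. destruct x as [f ty], y as [g ty']; unfold e6_eqv; cbn [fst snd].
  intros [Ht He]; subst ty'; destruct ty; unfold r0; cbn [fst snd]; split; auto;
  first [apply s1_resp | apply s2_resp]; auto. Qed.
Lemma r1_resp x y : e6_eqv u v x y -> e6_eqv u v (r1 x) (r1 y).
Proof. destruct x as [f ty], y as [g ty']; unfold e6_eqv; cbn [fst snd].
  intros [Ht He]; subst ty'; destruct ty; unfold r1; cbn [fst snd]; split; auto;
  apply s0_resp; auto. Qed.
Lemma r2_resp x y : e6_eqv u v x y -> e6_eqv u v (r2 x) (r2 y).
Proof. destruct x as [f ty], y as [g ty']; unfold e6_eqv; cbn [fst snd].
  intros [Ht He]; subst ty'; destruct ty; unfold r2; cbn [fst snd]; split; auto;
  apply s0_resp; auto. Qed.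

Definition Pres A := in_lattice u v (fst (mat A u)) (snd (mat A u)) /\
                     in_lattice u v (fst (mat A v)) (snd (mat A v)).

Lemma latt_mat A a b : Pres A -> in_lattice u v a b ->
  in_lattice u v (fst (mat A (a,b))) (snd (mat A (a,b))).
Proof.
  intros [[m1 [n1 [E1 F1]]] [m2 [n2 [E2 F2]]]] [m [n [Ea Eb]]]. subst a b.
  rewrite mat_lin. cbn [fst snd]. rewrite E1, F1, E2, F2.
  exists (m*m1 + n*m2), (m*n1+n*n2); split; ring.
Qed.

Lemma latt_matp A p : Pres A -> in_lattice u v (fst p) (snd p) ->
  in_lattice u v (fst (mat A p)) (snd (mat A p)).
Proof. destruct p; apply latt_mat. Qed.

Lemma Pres_comp A B C : Pres A -> Pres B -> (forall p, mat C p = mat A (mat B p)) -> Pres C.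
Proof. intros HA [HB1 HB2] E; split; rewrite E; apply latt_matp; auto. Qed.

Lemma latt_u : in_lattice u v (fst u) (snd u).
Proof. exists 1, 0; lia. Qed.
Lemma latt_v : in_lattice u v (fst v) (snd v).
Proof. exists 0, 1; lia. Qed.

Lemma Pres_I0 : Pres I0.
Proof. split; rewrite mat_I0; [apply latt_u|apply latt_v]. Qed.
Lemma Pres_R2 : Pres R2.
Proof. split; rewrite mat_R2; cbn [fst snd]; apply latt_opp; [apply latt_u|apply latt_v]. Qed.

Lemma Pres_R2c A C : Pres A -> (forall p, mat C p = mat R2 (mat A p)) -> Pres C.
Proof. intros HA E. eapply Pres_comp; [apply Pres_R2|exact HA|exact E]. Qed.

Lemma Pres_inv A : Pres A -> Pres (inv A).
Proof. intros HA; destruct A; simpl; auto;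
  eapply Pres_R2c; try exact HA; intros [x y]; simpl; f_equal; ring. Qed.

Lemma dact_inj A d d' : dact A d = dact A d' -> d = d'.
Proof. destruct A, d, d'; simpl; congruence. Qed.

Lemma haff_resp A t f g : Pres A -> sq_eqv u v f g -> sq_eqv u v (haff A t f) (haff A t g).
Proof.
  destruct f as [a b d s], g as [a' b' d' s']; unfold sq_eqv, haff; cbn [sx sy sd ss].
  intros HP [Hd [Hs Hl]]; subst d' s'; split;[reflexivity|split;[reflexivity|]].
  eapply latt_eq; [apply (latt_mat A _ _ HP Hl)| |]; destruct A; simpl; ring.
Qed.

Lemma haff_refl A t f g : Pres A -> sq_eqv u v (haff A t f) (haff A t g) -> sq_eqv u v f g.
Proof.
  destruct f as [a b d s], g as [a' b' d' s']; unfold sq_eqv, haff; cbn [sx sy sd ss].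
  intros HP [Hd [Hs Hl]]. split; [apply dact_inj in Hd; auto|split].
  - destruct (flip A), s, s'; simpl in *; congruence.
  - assert (Hl' : in_lattice u v (fst (mat A (a'-a, b'-b))) (snd (mat A (a'-a, b'-b)))).
    { eapply latt_eq; [exact Hl| |]; destruct A; simpl; ring. }
    pose proof (latt_matp (inv A) _ (Pres_inv A HP) Hl') as H.
    rewrite mat_inv in H. exact H.
Qed.

Lemma haff_surj A t y : exists x, haff A t x = y.
Proof.
  exists (SqF (fst (mat (inv A) (sx y - fst t, sy y - snd t)))
              (snd (mat (inv A) (sx y - fst t, sy y - snd t)))
              (dact (inv A) (sd y)) (xorb (flip A) (ss y))).
  destruct y as [a b d s], t as [t1 t2]; destruct A, d, s; unfold haff; simpl; f_equal; ring.
Qed.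

Lemma haff_qaut A t : Pres A -> is_qaut (sq_eqv u v) s0 s1 s2 (haff A t).
Proof.
  intros HP; split; [|split; [|split; [|split; [|split]]]].
  - intros; apply haff_resp; auto.
  - intros x y; apply haff_refl; auto.
  - intros y; destruct (haff_surj A t y) as [x Hx]; exists x; rewrite Hx; apply sq_refl.
  - intros x; rewrite haff_s0; apply sq_refl.
  - intros x; rewrite haff_s1; apply sq_refl.
  - intros x; rewrite haff_s2; apply sq_refl.
Qed.

Lemma haff6_qaut A t : Pres A -> is_qaut (e6_eqv u v) r0 r1 r2 (haff6 A t).
Proof.
  intros HP; split; [|split; [|split; [|split; [|split]]]].
  - intros [f ty] [g ty'] [H1 H2]; split; [exact H1|apply haff_resp; auto].
  - intros [f ty] [g ty'] [H1 H2]; split; [exact H1|eapply haff_refl; [exact HP|exact H2]].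
  - intros [g ty]; destruct (haff_surj A t g) as [x Hx]; exists (x, ty);
    unfold haff6; cbn [fst snd]; rewrite Hx; apply e6_refl.
  - intros [f ty]; destruct ty; unfold haff6, r0; cbn [fst snd];
    rewrite ?haff_s1, ?haff_s2; apply e6_refl.
  - intros [f ty]; destruct ty; unfold haff6, r1; cbn [fst snd];
    rewrite ?haff_s0; apply e6_refl.
  - intros [f ty]; destruct ty; unfold haff6, r2; cbn [fst snd];
    rewrite ?haff_s0; apply e6_refl.
Qed.

End L.

Definition f0 := SqF 0 0 dE true.

Lemma sq_conn (S : sqflag -> Prop) :
  (forall f, S f -> S (s0 f)) -> (forall f, S f -> S (s1 f)) -> (forall f, S f -> S (s2 f)) ->
  S f0 -> forall f, S f.
Proof.
  intros H0 H1 H2 Hf0.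
  assert (Hs : forall a b d s, S (SqF a b d s) -> S (SqF a b d (negb s)))
    by (intros a b d s H; exact (H2 _ H)).
  assert (Hall : forall a b d s, S (SqF a b d s) -> forall s', S (SqF a b d s')).
  { intros a b d s H s'. destruct s, s'; auto; exact (Hs _ _ _ _ H). }
  assert (Hsucc : forall a b d s, S (SqF a b d s) -> forall s', S (SqF a b (dsucc d) s')).
  { intros a b d s H s'. pose proof (Hall a b d s H true) as H'. apply H1 in H'.
    change (S (SqF a b (dsucc d) false)) in H'. exact (Hall _ _ _ _ H' s'). }
  assert (Hv : forall a b d s, S (SqF a b d s) -> forall d' s', S (SqF a b d' s')).
  { intros a b d s H d' s'.
    pose proof (Hsucc _ _ _ _ H true) as K1. pose proof (Hsucc _ _ _ _ K1 true) as K2.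
    pose proof (Hsucc _ _ _ _ K2 true) as K3.
    destruct d, d'; simpl in *;
    first [exact (Hall _ _ _ _ H s') | exact (Hall _ _ _ _ K1 s')
          | exact (Hall _ _ _ _ K2 s') | exact (Hall _ _ _ _ K3 s')]. }
  assert (Hxp : forall a b, S (SqF a b dE true) -> S (SqF (a+1) b dE true)).
  { intros a b H. apply H0 in H. change (S (SqF (a+1) (b+0) dW false)) in H.
    rewrite Z.add_0_r in H. exact (Hv _ _ _ _ H dE true). }
  assert (Hxm : forall a b, S (SqF a b dE true) -> S (SqF (a + -1) b dE true)).
  { intros a b H. pose proof (Hv _ _ _ _ H dW true) as H'. apply H0 in H'.
    change (S (SqF (a + -1) (b+0) dE false)) in H'.
    rewrite Z.add_0_r in H'. exact (Hv _ _ _ _ H' dE true). }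
  assert (Hyp : forall a b, S (SqF a b dE true) -> S (SqF a (b+1) dE true)).
  { intros a b H. pose proof (Hv _ _ _ _ H dN true) as H'. apply H0 in H'.
    change (S (SqF (a+0) (b+1) dS false)) in H'.
    rewrite Z.add_0_r in H'. exact (Hv _ _ _ _ H' dE true). }
  assert (Hym : forall a b, S (SqF a b dE true) -> S (SqF a (b + -1) dE true)).
  { intros a b H. pose proof (Hv _ _ _ _ H dS true) as H'. apply H0 in H'.
    change (S (SqF (a+0) (b + -1) dN false)) in H'.
    rewrite Z.add_0_r in H'. exact (Hv _ _ _ _ H' dE true). }
  assert (Hrow : forall a, S (SqF a 0 dE true)).
  { apply (Z.peano_ind (fun a => S (SqF a 0 dE true))).
    - exact Hf0.
    - intros x Hx; unfold Z.succ; apply Hxp; auto.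
    - intros x Hx; unfold Z.pred; apply Hxm; auto. }
  assert (Hgrid : forall a b, S (SqF a b dE true)).
  { intros a. apply (Z.peano_ind (fun b => S (SqF a b dE true))).
    - apply Hrow.
    - intros x Hx; unfold Z.succ; apply Hyp; auto.
    - intros x Hx; unfold Z.pred; apply Hym; auto. }
  intros [a b d s]. exact (Hv _ _ _ _ (Hgrid a b) d s).
Qed.

Lemma e6_conn (S : e6flag -> Prop) :
  (forall x, S x -> S (r0 x)) -> (forall x, S x -> S (r1 x)) -> (forall x, S x -> S (r2 x)) ->
  S (f0, tA) -> forall x, S x.
Proof.
  intros H0 H1 H2 Hb.
  assert (AB : forall f, S (f, tA) -> S (f, tB)) by (intros f H; exact (H1 _ H)).
  assert (BC : forall f, S (f, tB) -> S (f, tC)) by (intros f H; exact (H2 _ H)).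
  assert (HA : forall f, S (f, tA)).
  { apply sq_conn.
    - intros f H. exact (H2 _ H).
    - intros f H. apply AB in H. apply H0 in H. change (S (s1 f, tB)) in H.
      apply H1 in H. exact H.
    - intros f H. exact (H0 _ H).
    - exact Hb. }
  intros [f ty]; destruct ty; auto.
Qed.

Lemma pick_A (d : dir) (b : bool) : exists A, dact A dE = d /\ xorb (flip A) true = b.
Proof.
  destruct d, b;
  first [exists I0; split; reflexivity | exists R1; split; reflexivity
        | exists R2; split; reflexivity | exists R3; split; reflexivity
        | exists FX; split; reflexivity | exists FY; split; reflexivity
        | exists FD; split; reflexivity | exists FA; split; reflexivity].
Qed.

Lemma mat00 A : mat A (0,0) = (0,0).
Proof. destruct A; reflexivity. Qed.

Section R.
Variables u v : Z * Z.

Lemma sq_rigid g : is_qaut (sq_eqv u v) s0 s1 s2 g ->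
  exists A t, Pres u v A /\ forall f, sq_eqv u v (g f) (haff A t f).
Proof.
  intros Hg. destruct Hg as [Hr [Hrf [Hsu [C0 [C1 C2]]]]].
  destruct (pick_A (sd (g f0)) (ss (g f0))) as [A [HA1 HA2]].
  exists A, (sx (g f0), sy (g f0)).
  assert (E0 : haff A (sx (g f0), sy (g f0)) f0 = g f0).
  { remember (g f0) as y eqn:Ey; destruct y as [a b d s]; cbn [sx sy sd ss] in *.
    unfold haff, f0; cbn [sx sy sd ss]; rewrite HA1, HA2, mat00; cbn [fst snd]; f_equal; ring. }
  assert (Hall : forall f, sq_eqv u v (g f) (haff A (sx (g f0), sy (g f0)) f)).
  { apply sq_conn.
    - intros f H. eapply sq_trans; [apply C0|]. rewrite haff_s0. apply s0_resp. exact H.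
    - intros f H. eapply sq_trans; [apply C1|]. rewrite haff_s1. apply s1_resp. exact H.
    - intros f H. eapply sq_trans; [apply C2|]. rewrite haff_s2. apply s2_resp. exact H.
    - rewrite E0. apply sq_refl. }
  split; [|exact Hall].
  assert (Hk : forall p, in_lattice u v (fst p) (snd p) ->
                 in_lattice u v (fst (mat A p)) (snd (mat A p))).
  { intros p Hp.
    assert (H1 : sq_eqv u v f0 (SqF (fst p) (snd p) dE true)).
    { split; [reflexivity|split;[reflexivity|]]. unfold f0; cbn [sx sy].
      eapply latt_eq; [exact Hp| ring | ring]. }
    apply Hr in H1.
    assert (H2 : sq_eqv u v (haff A (sx (g f0), sy (g f0)) f0)
                            (haff A (sx (g f0), sy (g f0)) (SqF (fst p) (snd p) dE true))).
    { eapply sq_trans; [apply sq_sym, Hall|]. eapply sq_trans; [exact H1| apply Hall]. }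
    destruct H2 as [_ [_ H3]]. unfold haff, f0 in H3; cbn [sx sy] in H3.
    eapply latt_eq; [exact H3| |]; destruct p, A; simpl; ring. }
  split; apply Hk; [apply latt_u | apply latt_v].
Qed.

Definition w (x : e6flag) := r0 (r1 (r0 (r1 (r0 (r1 (r0 (r1 x))))))).

Lemma w_tC x : e6_eqv u v (w x) x <-> snd x = tC.
Proof.
  destruct x as [[a b d s] ty]; destruct ty, d, s; unfold w, e6_eqv, sq_eqv; cbn;
  split; intro H; try discriminate; try reflexivity;
  try (destruct H as [_ [H _]]; discriminate);
  try (split; [reflexivity| split;[reflexivity|split;[reflexivity|
        eapply latt_eq; [apply latt0| lia| lia]]]]).
Qed.

Section G.
Variable g : e6flag -> e6flag.
Hypothesis Hg : is_qaut (e6_eqv u v) r0 r1 r2 g.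

Lemma step01 y z : e6_eqv u v (g y) z -> e6_eqv u v (g (r0 (r1 y))) (r0 (r1 z)).
Proof.
  destruct Hg as [Hr [Hrf [Hsu [C0 [C1 C2]]]]]. intros H.
  eapply e6_trans; [apply C0|]. apply r0_resp.
  eapply e6_trans; [apply C1|]. apply r1_resp. exact H.
Qed.

Lemma g_w x : e6_eqv u v (g (w x)) (w (g x)).
Proof. unfold w; repeat apply step01; apply e6_refl. Qed.

Lemma g_tC x : snd (g x) = tC <-> snd x = tC.
Proof.
  destruct Hg as [Hr [Hrf _]].
  split; intro H.
  - apply (w_tC x). apply Hrf. eapply e6_trans; [apply g_w|]. apply (w_tC (g x)), H.
  - apply (w_tC (g x)). eapply e6_trans; [apply e6_sym, g_w|]. apply Hr. apply (w_tC x), H.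
Qed.

Lemma g_tA : snd (g (f0, tA)) = tA.
Proof.
  assert (H1 : snd (g (f0,tA)) <> tC).
  { intro H. apply (proj1 (g_tC _)) in H. cbn in H. discriminate. }
  assert (H2 : snd (g (r2 (f0,tA))) <> tC).
  { intro H. apply (proj1 (g_tC _)) in H. cbn in H. discriminate. }
  destruct Hg as [_ [_ [_ [_ [_ C2]]]]].
  destruct (C2 (f0,tA)) as [E _]. rewrite E in H2.
  destruct (g (f0, tA)) as [f ty]; destruct ty; cbn in *; congruence.
Qed.

Lemma e6_rigid : exists A t, Pres u v A /\ forall x, e6_eqv u v (g x) (haff6 A t x).
Proof.
  pose proof g_tA as HT.
  destruct Hg as [Hr [Hrf [Hsu [C0 [C1 C2]]]]].
  remember (g (f0,tA)) as y eqn:Ey. destruct y as [[a b d s] ty]. cbn in HT. subst ty.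
  destruct (pick_A d s) as [A [HA1 HA2]].
  exists A, (a, b).
  assert (E0 : haff6 A (a,b) (f0,tA) = g (f0,tA)).
  { rewrite <- Ey. unfold haff6, haff, f0; cbn [fst snd sx sy sd ss]; rewrite HA1, HA2, mat00;
    cbn [fst snd]; f_equal; f_equal; ring. }
  assert (Hall : forall x, e6_eqv u v (g x) (haff6 A (a, b) x)).
  { apply e6_conn.
    - intros x H. eapply e6_trans; [apply C0|].
      replace (haff6 A (a, b) (r0 x)) with (r0 (haff6 A (a, b) x)).
      + apply r0_resp; exact H.
      + destruct x as [f []]; unfold haff6, r0; cbn [fst snd]; rewrite ?haff_s1, ?haff_s2; reflexivity.
    - intros x H. eapply e6_trans; [apply C1|].
      replace (haff6 A (a, b) (r1 x)) with (r1 (haff6 A (a, b) x)).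
      + apply r1_resp; exact H.
      + destruct x as [f []]; unfold haff6, r1; cbn [fst snd]; rewrite ?haff_s0; reflexivity.
    - intros x H. eapply e6_trans; [apply C2|].
      replace (haff6 A (a, b) (r2 x)) with (r2 (haff6 A (a, b) x)).
      + apply r2_resp; exact H.
      + destruct x as [f []]; unfold haff6, r2; cbn [fst snd]; rewrite ?haff_s0; reflexivity.
    - rewrite E0. apply e6_refl. }
  split; [|exact Hall].
  assert (Hk : forall p, in_lattice u v (fst p) (snd p) ->
                 in_lattice u v (fst (mat A p)) (snd (mat A p))).
  { intros p Hp.
    assert (H1 : e6_eqv u v (f0,tA) (SqF (fst p) (snd p) dE true, tA)).
    { split; [reflexivity|split; [reflexivity|split;[reflexivity|]]]. unfold f0; cbn [fst sx sy].
      eapply latt_eq; [exact Hp| ring | ring]. }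
    apply Hr in H1.
    assert (H2 : e6_eqv u v (haff6 A (a, b) (f0,tA))
                            (haff6 A (a, b) (SqF (fst p) (snd p) dE true, tA))).
    { eapply e6_trans; [apply e6_sym, Hall|]. eapply e6_trans; [exact H1| apply Hall]. }
    destruct H2 as [_ [_ [_ H3]]]. unfold haff6, haff, f0 in H3; cbn [fst sx sy] in H3.
    eapply latt_eq; [exact H3| |]; destruct p, A; simpl; ring. }
  split; apply Hk; [apply latt_u | apply latt_v].
Qed.

End G.
End R.

Inductive ec := EA (h : bool) | ES (c1 c2 : Z).

Definition corner (d : dir) (s : bool) : Z * Z :=
  match d, s with
  | dE, true => (1,1) | dE, false => (1,-1)
  | dN, true => (-1,1) | dN, false => (1,1)
  | dW, true => (-1,-1) | dW, false => (-1,1)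
  | dS, true => (1,-1) | dS, false => (-1,-1) end.

Definition ec6 (x : e6flag) : ec :=
  match snd x with
  | tA => EA (hor (sd (fst x)))
  | _ => ES (fst (corner (sd (fst x)) (ss (fst x)))) (snd (corner (sd (fst x)) (ss (fst x))))
  end.

Definition ecact A (e : ec) : ec :=
  match e with
  | EA h => EA (xorb (swap A) h)
  | ES c1 c2 => ES (fst (mat A (c1,c2))) (snd (mat A (c1,c2)))
  end.

Ltac solve_eqv :=
  split; [reflexivity | split; [reflexivity | eapply latt_eq; [apply latt0 | cbn; lia | cbn; lia]]].
Ltac solve_se := first [left; solve_eqv | right; left; solve_eqv
                       | right; right; left; solve_eqv | right; right; right; solve_eqv].
Ltac solve_eqv6 := split; [reflexivity | solve_eqv].
Ltac solve_se6 := first [left; solve_eqv6 | right; left; solve_eqv6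
                       | right; right; left; solve_eqv6 | right; right; right; solve_eqv6].

Section E.
Variables u v : Z * Z.

Lemma sq_edge_tr c e d s y : hor (sd y) = hor d ->
  exists t1 t2, same_edge (sq_eqv u v) s0 s2 (SqF (c + t1) (e + t2) d s) y.
Proof.
  destruct y as [a b d' s']; cbn [sd]; destruct d, s, d', s'; cbn; intro H; try discriminate;
  first [ exists (a-c), (b-e); solve_se | exists (a-c-1), (b-e); solve_se
        | exists (a-c+1), (b-e); solve_se | exists (a-c), (b-e-1); solve_se
        | exists (a-c), (b-e+1); solve_se ].
Qed.

Lemma e6_edge_tr c e d s ty y : ec6 y = ec6 (SqF c e d s, ty) ->
  exists t1 t2, same_edge (e6_eqv u v) r0 r2 (SqF (c + t1) (e + t2) d s, ty) y.
Proof.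
  destruct y as [[a b d' s'] ty']; destruct ty, ty', d, s, d', s'; cbn; intro H; try discriminate;
  first [ exists (a-c), (b-e); solve_se6 | exists (a-c-1), (b-e); solve_se6
        | exists (a-c+1), (b-e); solve_se6 | exists (a-c), (b-e-1); solve_se6
        | exists (a-c), (b-e+1); solve_se6 ].
Qed.

End E.

Section I.
Variables u v : Z * Z.

Lemma sq_eqv_sd f g : sq_eqv u v f g -> sd f = sd g.
Proof. intros [H _]; exact H. Qed.

Lemma hor_dopp d : hor (dopp d) = hor d.
Proof. destruct d; reflexivity. Qed.

Lemma se_hor x y : same_edge (sq_eqv u v) s0 s2 x y -> hor (sd x) = hor (sd y).
Proof.
  destruct x as [a b d s]; intros [H|[H|[H|H]]]; apply sq_eqv_sd in H; rewrite <- H;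
  cbn; rewrite ?hor_dopp; reflexivity.
Qed.

Lemma se_eqv_l a b y : sq_eqv u v a b -> same_edge (sq_eqv u v) s0 s2 b y ->
  same_edge (sq_eqv u v) s0 s2 a y.
Proof.
  intros E [H|[H|[H|H]]].
  - left; eapply sq_trans; eauto.
  - right; left; eapply sq_trans; [apply s0_resp; exact E| exact H].
  - right; right; left; eapply sq_trans; [apply s2_resp; exact E| exact H].
  - right; right; right; eapply sq_trans; [apply s0_resp, s2_resp; exact E| exact H].
Qed.

Lemma hor_haff A t x : hor (sd (haff A t x)) = xorb (swap A) (hor (sd x)).
Proof. unfold haff; cbn [sd]; destruct A, (sd x); reflexivity. Qed.

Lemma RS_iff x y : edge_orbit_rel (sq_eqv u v) s0 s1 s2 x y <->
  exists A, Pres u v A /\ hor (sd y) = xorb (swap A) (hor (sd x)).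
Proof.
  split.
  - intros [g [Hg Hse]]. destruct (sq_rigid u v g Hg) as [A [t [HP Hall]]].
    exists A; split; auto. rewrite <- (hor_haff A t). symmetry. apply se_hor.
    eapply se_eqv_l; [apply sq_sym, Hall| exact Hse].
  - intros [A [HP He]].
    destruct x as [a b d s].
    destruct (sq_edge_tr u v (fst (mat A (a,b))) (snd (mat A (a,b))) (dact A d) (xorb (flip A) s) y)
      as [t1 [t2 Ht]].
    + rewrite He. rewrite <- (hor_haff A (0,0) (SqF a b d s)). reflexivity.
    + exists (haff A (t1,t2)); split; [apply haff_qaut; auto| exact Ht].
Qed.

Lemma e6_eqv_ec x y : e6_eqv u v x y -> ec6 x = ec6 y.
Proof.
  destruct x as [[a b d s] ty], y as [[a' b' d' s'] ty']; intros [Ht [Hd [Hs _]]];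
  cbn in *; subst; reflexivity.
Qed.

Lemma ec6_r0 x : ec6 (r0 x) = ec6 x.
Proof. destruct x as [[a b d s] ty]; destruct ty, d, s; reflexivity. Qed.
Lemma ec6_r2 x : ec6 (r2 x) = ec6 x.
Proof. destruct x as [[a b d s] ty]; destruct ty, d, s; reflexivity. Qed.

Lemma se6_ec x y : same_edge (e6_eqv u v) r0 r2 x y -> ec6 x = ec6 y.
Proof.
  intros [H|[H|[H|H]]]; apply e6_eqv_ec in H; rewrite <- H; rewrite ?ec6_r0, ?ec6_r2; reflexivity.
Qed.

Lemma se6_eqv_l a b y : e6_eqv u v a b -> same_edge (e6_eqv u v) r0 r2 b y ->
  same_edge (e6_eqv u v) r0 r2 a y.
Proof.
  intros E [H|[H|[H|H]]].
  - left; eapply e6_trans; eauto.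
  - right; left; eapply e6_trans; [apply r0_resp; exact E| exact H].
  - right; right; left; eapply e6_trans; [apply r2_resp; exact E| exact H].
  - right; right; right; eapply e6_trans; [apply r0_resp, r2_resp; exact E| exact H].
Qed.

Lemma ec6_haff A t x : ec6 (haff6 A t x) = ecact A (ec6 x).
Proof. destruct x as [[a b d s] ty]; destruct A, d, s, ty; reflexivity. Qed.

Lemma R6_iff x y : edge_orbit_rel (e6_eqv u v) r0 r1 r2 x y <->
  exists A, Pres u v A /\ ec6 y = ecact A (ec6 x).
Proof.
  split.
  - intros [g [Hg Hse]]. destruct (e6_rigid u v g Hg) as [A [t [HP Hall]]].
    exists A; split; auto. rewrite <- (ec6_haff A t). symmetry. apply se6_ec.
    eapply se6_eqv_l; [apply e6_sym, Hall| exact Hse].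
  - intros [A [HP He]].
    destruct x as [[a b d s] ty].
    destruct (e6_edge_tr u v (fst (mat A (a,b))) (snd (mat A (a,b))) (dact A d) (xorb (flip A) s) ty y)
      as [t1 [t2 Ht]].
    + rewrite He. rewrite <- (ec6_haff A (0,0) (SqF a b d s, ty)). destruct A, d, s, ty; reflexivity.
    + exists (haff6 A (t1,t2)); split; [apply haff6_qaut; auto| exact Ht].
Qed.

End I.

Definition fH : e6flag := (SqF 0 0 dE true, tA).
Definition fV : e6flag := (SqF 0 0 dN true, tA).
Definition fNE : e6flag := (SqF 0 0 dE true, tB).
Definition fNW : e6flag := (SqF 0 0 dN true, tB).
Definition gH := SqF 0 0 dE true.
Definition gV := SqF 0 0 dN true.

Lemma ec6_cases x : ec6 x = EA true \/ ec6 x = EA false \/ ec6 x = ES 1 1 \/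
  ec6 x = ES (-1) 1 \/ ec6 x = ES (-1) (-1) \/ ec6 x = ES 1 (-1).
Proof.
  destruct x as [[a b d s] ty]; destruct ty, d, s; cbn;
  repeat (first [left; reflexivity | right]); reflexivity.
Qed.

Definition grp (e : ec) : nat := match e with EA _ => 0%nat | ES c1 c2 => if Z.eqb c1 c2 then 1%nat else 2%nat end.
Definition grp2 (e : ec) : nat := match e with EA true => 0%nat | EA false => 1%nat | ES _ _ => 2%nat end.

Lemma grp_lt e : (grp e < 3)%nat.
Proof. destruct e; simpl; [lia| destruct (Z.eqb c1 c2); lia]. Qed.

Lemma FOP2 {T} (P : T -> T -> Prop) a b : ForallOrdPairs P [a; b] -> P a b.
Proof. intros H; inversion H; subst. inversion H2; auto. Qed.

Lemma FOP4 {T} (P : T -> T -> Prop) a b c d : ForallOrdPairs P [a; b; c; d] ->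
  P a b /\ P a c /\ P a d /\ P b c /\ P b d /\ P c d.
Proof.
  intros H; inversion H as [|? ? Ha H1]; subst.
  inversion H1 as [|? ? Hb H2]; subst. inversion H2 as [|? ? Hc H3]; subst.
  rewrite Forall_forall in Ha, Hb, Hc.
  repeat split; [apply Ha|apply Ha|apply Ha|apply Hb|apply Hb|apply Hc]; simpl; auto.
Qed.

Section C.
Variables u v : Z * Z.
Notation P := (Pres u v).
Notation R6 := (edge_orbit_rel (e6_eqv u v) r0 r1 r2).
Notation RS := (edge_orbit_rel (sq_eqv u v) s0 s1 s2).

Lemma PR1R3 : P R1 -> P R3.
Proof. intros H; eapply Pres_R2c; [exact H|]; intros [x y]; simpl; f_equal; ring. Qed.
Lemma PR3R1 : P R3 -> P R1.
Proof. intros H; eapply Pres_R2c; [exact H|]; intros [x y]; simpl; f_equal; ring. Qed.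
Lemma PFXFY : P FX -> P FY.
Proof. intros H; eapply Pres_R2c; [exact H|]; intros [x y]; simpl; f_equal; ring. Qed.
Lemma PFYFX : P FY -> P FX.
Proof. intros H; eapply Pres_R2c; [exact H|]; intros [x y]; simpl; f_equal; ring. Qed.
Lemma PFDFA : P FD -> P FA.
Proof. intros H; eapply Pres_R2c; [exact H|]; intros [x y]; simpl; f_equal; ring. Qed.
Lemma PFAFD : P FA -> P FD.
Proof. intros H; eapply Pres_R2c; [exact H|]; intros [x y]; simpl; f_equal; ring. Qed.
Lemma PFDFX : P FD -> P FX -> P R1.
Proof. intros H1 H2; eapply Pres_comp; [exact H1|exact H2|]; intros [x y]; simpl; f_equal; ring. Qed.

Definition Sw := exists A, P A /\ swap A = true.
Definition NoSw := forall A, P A -> swap A = false.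

Lemma NoSw_facts : NoSw -> ~ P R1 /\ ~ P R3 /\ ~ P FD /\ ~ P FA.
Proof.
  intros H; repeat split; intro HP; specialize (H _ HP); discriminate.
Qed.

Ltac solveA E :=
  first [ exists I0; split; [assumption| rewrite E; reflexivity]
        | exists R1; split; [assumption| rewrite E; reflexivity]
        | exists R2; split; [assumption| rewrite E; reflexivity]
        | exists R3; split; [assumption| rewrite E; reflexivity]
        | exists FX; split; [assumption| rewrite E; reflexivity]
        | exists FY; split; [assumption| rewrite E; reflexivity]
        | exists FD; split; [assumption| rewrite E; reflexivity]
        | exists FA; split; [assumption| rewrite E; reflexivity] ].

Ltac cover :=
  let y := fresh "y" in let E := fresh "E" in
  intro y; destruct (ec6_cases y) as [E|[E|[E|[E|[E|E]]]]];
  first [ exists fH; split; [simpl; auto 10 | apply R6_iff; solveA E]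
        | exists fV; split; [simpl; auto 10 | apply R6_iff; solveA E]
        | exists fNE; split; [simpl; auto 10 | apply R6_iff; solveA E]
        | exists fNW; split; [simpl; auto 10 | apply R6_iff; solveA E] ].

Ltac nonrel :=
  repeat constructor;
  let H := fresh "H" in let A := fresh "A" in let HP := fresh "HP" in let HE := fresh "HE" in
  intro H; apply R6_iff in H; destruct H as [A [HP HE]]; destruct A; cbn in HE;
  try discriminate HE; contradiction.

Lemma X6_c2 : P R1 -> n_classes R6 2.
Proof.
  intros H1. pose proof (PR1R3 H1) as H3. pose proof (Pres_I0 u v) as H0. pose proof (Pres_R2 u v) as H2.
  exists [fH; fNE]; split; [reflexivity| split; [nonrel | cover]].
Qed.

Lemma X6_c3a : ~ P R1 -> P FD -> n_classes R6 3.
Proof.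
  intros nR1 HD. pose proof (Pres_I0 u v) as H0. pose proof (Pres_R2 u v) as H2.
  assert (nFY : ~ P FY) by (intro H; apply nR1, PFDFX; auto; apply PFYFX; auto).
  exists [fH; fNE; fNW]; split; [reflexivity| split; [nonrel | cover]].
Qed.

Lemma X6_c3b : NoSw -> P FX -> n_classes R6 3.
Proof.
  intros NS HX. destruct (NoSw_facts NS) as [nR1 [nR3 [nFD nFA]]].
  pose proof (Pres_I0 u v) as H0. pose proof (Pres_R2 u v) as H2. pose proof (PFXFY HX) as HY.
  exists [fH; fV; fNE]; split; [reflexivity| split; [nonrel | cover]].
Qed.

Lemma X6_c4 : NoSw -> ~ P FX -> n_classes R6 4.
Proof.
  intros NS nFX. destruct (NoSw_facts NS) as [nR1 [nR3 [nFD nFA]]].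
  pose proof (Pres_I0 u v) as H0. pose proof (Pres_R2 u v) as H2.
  assert (nFY : ~ P FY) by (intro H; apply nFX, PFYFX; auto).
  exists [fH; fV; fNE; fNW]; split; [reflexivity| split; [nonrel | cover]].
Qed.

Lemma Sw_grp x y : Sw -> grp (ec6 x) = grp (ec6 y) -> R6 x y.
Proof.
  intros [B [HB HsB]] Hg. apply R6_iff.
  pose proof (Pres_I0 u v) as H0. pose proof (Pres_R2 u v) as H2.
  destruct (ec6_cases x) as [Ex|[Ex|[Ex|[Ex|[Ex|Ex]]]]];
  destruct (ec6_cases y) as [Ey|[Ey|[Ey|[Ey|[Ey|Ey]]]]];
  rewrite Ex, Ey in *; cbn in Hg; try discriminate Hg;
  first [ exists I0; split; [assumption| reflexivity]
        | exists R2; split; [assumption| reflexivity]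
        | exists B; split; [assumption| cbn; rewrite HsB; reflexivity] ].
Qed.

Lemma X6_not4 : Sw -> ~ n_classes R6 4.
Proof.
  intros S [xs [Hl [Hf _]]].
  destruct xs as [|a [|b [|c [|d [|]]]]]; simpl in Hl; try discriminate.
  apply FOP4 in Hf. destruct Hf as [Hab [Hac [Had [Hbc [Hbd Hcd]]]]].
  assert (grp (ec6 a) <> grp (ec6 b)) by (intro E; apply Hab, Sw_grp; auto).
  assert (grp (ec6 a) <> grp (ec6 c)) by (intro E; apply Hac, Sw_grp; auto).
  assert (grp (ec6 a) <> grp (ec6 d)) by (intro E; apply Had, Sw_grp; auto).
  assert (grp (ec6 b) <> grp (ec6 c)) by (intro E; apply Hbc, Sw_grp; auto).
  assert (grp (ec6 b) <> grp (ec6 d)) by (intro E; apply Hbd, Sw_grp; auto).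
  assert (grp (ec6 c) <> grp (ec6 d)) by (intro E; apply Hcd, Sw_grp; auto).
  pose proof (grp_lt (ec6 a)). pose proof (grp_lt (ec6 b)).
  pose proof (grp_lt (ec6 c)). pose proof (grp_lt (ec6 d)). lia.
Qed.

Lemma NoSw_grp2 x y : NoSw -> R6 x y -> grp2 (ec6 x) = grp2 (ec6 y).
Proof.
  intros NS H. apply R6_iff in H. destruct H as [A [HP HE]]. rewrite HE.
  destruct (ec6 x) as [h|c1 c2]; cbn; [rewrite (NS A HP); reflexivity| reflexivity].
Qed.

Lemma X6_not2 : NoSw -> ~ n_classes R6 2.
Proof.
  intros NS [xs [Hl [Hf Hc]]].
  destruct xs as [|a [|b [|]]]; simpl in Hl; try discriminate.
  destruct (Hc fH) as [x1 [I1 R1']]. destruct (Hc fV) as [x2 [I2 R2']].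
  destruct (Hc fNE) as [x3 [I3 R3']].
  apply (NoSw_grp2 _ _ NS) in R1'. apply (NoSw_grp2 _ _ NS) in R2'.
  apply (NoSw_grp2 _ _ NS) in R3'. cbn in R1', R2', R3'.
  simpl in I1, I2, I3.
  destruct I1 as [<-|[<-|[]]]; destruct I2 as [<-|[<-|[]]]; destruct I3 as [<-|[<-|[]]]; congruence.
Qed.

Lemma XS_one : Sw -> n_classes RS 1.
Proof.
  intros [B [HB HsB]]. exists [gH]; split; [reflexivity| split; [repeat constructor|]].
  intros y; exists gH; split; [simpl; auto|]. apply RS_iff.
  destruct (hor (sd y)) eqn:E.
  - exists I0; split; [apply Pres_I0| reflexivity].
  - exists B; split; [exact HB| rewrite HsB; reflexivity].
Qed.

Lemma XS_two : NoSw -> n_classes RS 2.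
Proof.
  intros NS. exists [gH; gV]; split; [reflexivity| split].
  - repeat constructor. intro H; apply RS_iff in H; destruct H as [A [HP HE]].
    rewrite (NS A HP) in HE. discriminate.
  - intros y. destruct (hor (sd y)) eqn:E.
    + exists gH; split; [simpl; auto| apply RS_iff; exists I0; split; [apply Pres_I0| rewrite E; reflexivity]].
    + exists gV; split; [simpl; auto| apply RS_iff; exists I0; split; [apply Pres_I0| rewrite E; reflexivity]].
Qed.

Lemma XS_not2 : Sw -> ~ n_classes RS 2.
Proof.
  intros [B [HB HsB]] [xs [Hl [Hf _]]].
  destruct xs as [|a [|b [|]]]; simpl in Hl; try discriminate.
  apply FOP2 in Hf. apply Hf, RS_iff.
  destruct (hor (sd a)), (hor (sd b)) eqn:E.
  all: first [ exists I0; split; [apply Pres_I0| rewrite ?E; reflexivity]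
             | exists B; split; [exact HB| rewrite ?E, HsB; reflexivity] ].
Qed.

Lemma XS_not1 : NoSw -> ~ n_classes RS 1.
Proof.
  intros NS [xs [Hl [Hf Hc]]].
  destruct xs as [|a [|]]; simpl in Hl; try discriminate.
  destruct (Hc gH) as [x1 [I1 H1]]. destruct (Hc gV) as [x2 [I2 H2]].
  simpl in I1, I2. destruct I1 as [<-|[]]. destruct I2 as [<-|[]].
  apply RS_iff in H1. apply RS_iff in H2.
  destruct H1 as [A1 [HP1 E1]]. destruct H2 as [A2 [HP2 E2]].
  rewrite (NS _ HP1) in E1. rewrite (NS _ HP2) in E2. cbn in E1, E2. congruence.
Qed.

Lemma Sw_dec : Sw \/ NoSw.
Proof.
  destruct (classic Sw) as [H|H]; [left; exact H| right].
  intros A HP. destruct (swap A) eqn:E; [exfalso; apply H; exists A; auto| reflexivity].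
Qed.

Lemma Sw_noR1 : Sw -> ~ P R1 -> P FD.
Proof.
  intros [B [HB HsB]] nR1. destruct B; try discriminate.
  - contradiction.
  - exfalso; apply nR1, PR3R1; auto.
  - exact HB.
  - apply PFAFD; auto.
Qed.

End C.

Theorem lemma3p6 (u v : Z * Z) (hK : rank2 u v) :
  (X6sharp_edge_orbits u v 2 -> X6_edge_orbits u v 3 \/ X6_edge_orbits u v 4) /\
  (X6sharp_edge_orbits u v 1 -> X6_edge_orbits u v 2 \/ X6_edge_orbits u v 3) /\
  (X6_edge_orbits u v 4 -> X6sharp_edge_orbits u v 2) /\
  (X6_edge_orbits u v 2 -> X6sharp_edge_orbits u v 1).
Proof.
  unfold X6sharp_edge_orbits, X6_edge_orbits.
  split; [|split; [|split]].
  - intros H. destruct (Sw_dec u v) as [S|NS].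
    + exfalso; exact (XS_not2 u v S H).
    + destruct (classic (Pres u v FX)) as [HX|nX].
      * left; apply X6_c3b; auto.
      * right; apply X6_c4; auto.
  - intros H. destruct (Sw_dec u v) as [S|NS].
    + destruct (classic (Pres u v R1)) as [H1|n1].
      * left; apply X6_c2; auto.
      * right; apply X6_c3a; auto. apply Sw_noR1; auto.
    + exfalso; exact (XS_not1 u v NS H).
  - intros H. destruct (Sw_dec u v) as [S|NS].
    + exfalso; exact (X6_not4 u v S H).
    + apply XS_two; auto.
  - intros H. destruct (Sw_dec u v) as [S|NS].
    + apply XS_one; auto.
    + exfalso; exact (X6_not2 u v NS H).
Qed.
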